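(* Let $G$ be a vertex-weighted multigraph and let $H$ be a spanning submultigraph of $G$. If $H$ is admissibly contractible, then so is $G$.
   Context: A vertex-weighted multigraph is a quadruple $G=(V,E,r,\mathrm{wt})$ with $V$ a finite set of vertices, $E$ a finite set of edges, $r$ assigning to each edge an unordered pair $\{v,w\}$ of distinct vertices (its endpoints), and $\mathrm{wt}:V\to\mathbb{Z}$. Two vertices are adjacent if some edge has them as endpoints. $\deg(v)=\#\{e\in E: v\in r(e)\}$ and $\mathrm{rdeg}(v)$ is the number of vertices adjacent to $v$. $G_1$ is a submultigraph of $G_2$ if there are injective maps $\phi:V_1\to V_2$, $\psi:E_1\to E_2$ with $r_2\circ\psi=\phi\circ r_1$ and $\mathrm{wt}_1\leq\mathrm{wt}_2\circ\phi$; it is spanning if moreover $\phi$ is bijective. For adjacent vertices $v,w$ of $G$, the contraction $G'$ of $G$ with respect to $\{v,w\}$ is obtained by identifying $v$ and $w$ to one vertex of weight $\mathrm{wt}(v)+\mathrm{wt}(w)$, deleting all edges between $v$ and $w$, keeping all other edges (with endpoints replaced via the identification) and all other weights. Let $m=\#\{e: r(e)=\{v,w\}\}$. The contraction is admissible if, for some labeling of the pair as $v,w$, there is an integer $0\leq l<m$ such that: every vertex $x\notin\{v,w\}$ has $\deg(x)\geq 3$; $\mathrm{wt}(v)\geq l+1$ and $\mathrm{wt}(w)\geq l+2$; $\deg(v)-m+l\geq 3$ and $\deg(w)-m+l\geq 3$. $G$ is admissibly contractible if there is a sequence $G=G_0,G_1,\dots,G_k$ with $G_k$ a single vertex and each $G_i$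 an admissible contraction of $G_{i-1}$. *)

(* Defs.v *)
From mathcomp Require Import all_boot all_order all_algebra.
Unset Implicit Arguments. Unset Strict Implicit. Unset Printing Implicit Defensive.

Import Order.TTheory GRing.Theory Num.Theory.

(* The unordered endpoint pair
   r(e) = {v, w} is stored as an ordered pair [ends e] with distinct
   components; all uses only depend on the underlying unordered pair. *)
Record mgraph := MGraph {
  V : finType;
  E : finType;
  ends : E -> V * V;
  ends_ne : forall e, (ends e).1 != (ends e).2;
  wt : V -> int
}.
Arguments ends {m} e.
Arguments wt {m} x.

Definition joins {G : mgraph} (e : E G) (x y : V G) : bool :=
  (ends e == (x, y)) || (ends e == (y, x)).

Definition incident {G : mgraph} (e : E G) (x : V G) : bool :=
  ((ends e).1 == x) || ((ends e).2 == x).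

Definition adjacent {G : mgraph} (x y : V G) : bool :=
  [exists e, joins e x y].

Definition deg {G : mgraph} (x : V G) : nat := #|[set e | incident e x]|.

Definition mult {G : mgraph} (x y : V G) : nat := #|[set e | joins e x y]|.

Definition submultigraph_via (G1 G2 : mgraph) (phi : V G1 -> V G2)
    (psi : E G1 -> E G2) : Prop :=
  injective phi /\ injective psi /\
  (forall e, joins (psi e) (phi (ends e).1) (phi (ends e).2)) /\
  (forall x, (wt x <= wt (phi x))%R).

Definition submultigraph (G1 G2 : mgraph) : Prop :=
  exists (phi : V G1 -> V G2) (psi : E G1 -> E G2), submultigraph_via G1 G2 phi psi.

Definition spanning_submultigraph (G1 G2 : mgraph) : Prop :=
  exists (phi : V G1 -> V G2) (psi : E G1 -> E G2), submultigraph_via G1 G2 phi psi /\ bijective phi.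

(* G' is (up to isomorphism) the contraction of G with respect to {v, w}:
   phi : V G -> V G' identifies exactly v and w and is onto; psi : E G -> E G'
   restricted to the edges not between v and w is a bijection onto E G'
   compatible with endpoints (replaced via the identification). *)
Definition contraction_of (G G' : mgraph) (v w : V G) : Prop :=
  adjacent v w /\
  exists (phi : V G -> V G') (psi : E G -> E G'),
    (forall y, exists x, phi x = y) /\
    (forall x y, phi x = phi y <-> (x = y \/ (x = v /\ y = w) \/ (x = w /\ y = v))) /\
    (forall x, x != v -> x != w -> wt (phi x) = wt x) /\
    wt (phi v) = (wt v + wt w)%R /\
    (forall e1 e2, ~~ joins e1 v w -> ~~ joins e2 v w -> psi e1 = psi e2 -> e1 = e2) /\
    (forall e', exists e, ~~ joins e v w /\ psi e = e') /\
    (forall e, ~~ joins e v w -> joins (psi e) (phi (ends e).1) (phi (ends e).2)).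

Definition admissible_contraction (G G' : mgraph) : Prop :=
  exists (v w : V G), contraction_of G G' v w /\
    exists l : nat, (l < mult v w)%N /\
      (forall x, x != v -> x != w -> (3 <= deg x)%N) /\
      ((l%:Z + 1)%R <= wt v)%R /\ ((l%:Z + 2)%R <= wt w)%R /\
      (3%:Z <= (deg v)%:Z - (mult v w)%:Z + l%:Z)%R /\
      (3%:Z <= (deg w)%:Z - (mult v w)%:Z + l%:Z)%R.

Inductive adm_contractible : mgraph -> Prop :=
  | adm_single G : #|V G| = 1%N -> adm_contractible G
  | adm_step G G' : admissible_contraction G G' -> adm_contractible G' ->
      adm_contractible G.

(* Main.v *)
Require Import Defs.
From mathcomp Require Import all_boot all_order all_algebra zify.
Import Order.TTheory GRing.Theory Num.Theory.
Set Implicit Arguments. Unset Strict Implicit.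

Lemma joinsE (G : mgraph) (e : E G) a b :
  joins e a b <-> ((ends e).1 = a /\ (ends e).2 = b) \/ ((ends e).1 = b /\ (ends e).2 = a).
Proof.
rewrite /joins; case: (ends e) => [x y] /=.
split.
- by case/orP => /eqP [-> ->]; [left|right].
- by case=> [[-> ->]|[-> ->]]; rewrite eqxx ?orbT.
Qed.

Lemma joins_sym (G : mgraph) (e : E G) a b : joins e a b = joins e b a.
Proof. by rewrite /joins orbC. Qed.

Lemma joins_ends (G : mgraph) (e : E G) : joins e (ends e).1 (ends e).2.
Proof. by apply/joinsE; left. Qed.

Lemma joins_incident (G : mgraph) (e : E G) a b : joins e a b -> incident e a.
Proof. by case/joinsE => [[<- _]|[_ <-]]; rewrite /incident eqxx ?orbT. Qed.

Lemma card_mono (A B : finType) (f : A -> B) (P : pred A) (Q : pred B) :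
  injective f -> (forall a, P a -> Q (f a)) ->
  #|[set a | P a]| <= #|[set b | Q b]|.
Proof.
move=> finj PQ; rewrite -(card_imset _ finj); apply: subset_leq_card.
apply/subsetP => b /imsetP [a]; rewrite inE => Pa ->; rewrite inE; exact: PQ.
Qed.

Lemma deg_split (G : mgraph) (x y : V G) :
  deg x = (mult x y + #|[set e | incident e x && ~~ joins e x y]|)%N.
Proof.
rewrite /deg /mult -(cardsID [set e | joins e x y] [set e | incident e x]).
congr (_ + _)%N; apply: eq_card => e; rewrite !inE.
- by case J: (joins e x y); rewrite ?andbF // (joins_incident J).
- by rewrite andbC.
Qed.

Lemma inj_surj_bij (A B : finType) (f : A -> B) :
  injective f -> (forall y, exists x, f x = y) -> bijective f.
Proof.
move=> finj fs.
have ex y : exists x, f x == y by case: (fs y) => x <-; exists x.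
exists (fun y => xchoose (ex y)) => [x|y]; last exact/eqP/(xchooseP (ex y)).
apply: finj; exact/eqP/(xchooseP (ex (f x))).
Qed.

Lemma section (A B : finType) (f : A -> B) :
  (forall y, exists x, f x = y) -> {g : B -> A | forall y, f (g y) = y}.
Proof.
move=> fs.
have ex y : exists x, f x == y by case: (fs y) => x <-; exists x.
exists (fun y => xchoose (ex y)) => y; exact/eqP/(xchooseP (ex y)).
Qed.

Section Contr.
End Contr.

Definition cV (G : mgraph) (w : V G) : finType := {x : V G | x != w}.
Definition cE (G : mgraph) (v w : V G) : finType := {e : E G | ~~ joins e v w}.
Definition cphi (G : mgraph) (v w : V G) (hvw : v != w) (x : V G) : @cV G w :=
  insubd (exist (fun x => x != w) v hvw) x.

Lemma val_cphi (G : mgraph) (v w : V G) (hvw : v != w) x :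
  val (cphi hvw x) = if x != w then x else v.
Proof. by rewrite /cphi val_insubd. Qed.

Lemma cphi_eq (G : mgraph) (v w : V G) (hvw : v != w) x y :
  cphi hvw x = cphi hvw y <-> (x = y \/ (x = v /\ y = w) \/ (x = w /\ y = v)).
Proof.
split.
- move=> /(congr1 val); rewrite !val_cphi.
  case: (eqVneq x w) => [->|xw]; case: (eqVneq y w) => [->|yw] /=.
  + by left.
  + by move=> <-; right; right.
  + by move=> ->; right; left.
  + by left.
- case=> [->//|[[-> ->]|[-> ->]]]; apply: val_inj; rewrite !val_cphi hvw eqxx //.
Qed.

Lemma cends_ne (G : mgraph) (v w : V G) (hvw : v != w) (e : @cE G v w) :
  (cphi hvw (ends (val e)).1, cphi hvw (ends (val e)).2).1 !=
  (cphi hvw (ends (val e)).1, cphi hvw (ends (val e)).2).2.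
Proof.
apply/eqP => /= /cphi_eq [].
- by move=> h; move: (ends_ne _ (val e)); rewrite h eqxx.
- move=> h; move: (valP e) => /negP; apply; apply/joinsE.
  by case: h => [[-> ->]|[-> ->]]; auto.
Qed.

Definition cwt (G : mgraph) (v w : V G) (y : @cV G w) : int :=
  if val y == v then (wt v + wt w)%R else wt (val y).

Definition contr (G : mgraph) (v w : V G) (hvw : v != w) : mgraph :=
  @MGraph (@cV G w) (@cE G v w)
    (fun e => (cphi hvw (ends (val e)).1, cphi hvw (ends (val e)).2))
    (cends_ne hvw) (@cwt G v w).

Lemma sectionP (A B : finType) (P : A -> B -> bool) :
  (forall y, exists x, P x y) -> {g : B -> A | forall y, P (g y) y}.
Proof.
move=> fs.
exists (fun y => xchoose (fs y)) => y; exact: (xchooseP (fs y)).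
Qed.

Lemma step (H H' G : mgraph) (phi : V H -> V G) (psi : E H -> E G) :
  submultigraph_via H G phi psi -> bijective phi -> admissible_contraction H H' ->
  exists G', admissible_contraction G G' /\ spanning_submultigraph H' G'.
Proof.
move=> [phinj [psinj [psij phiwt]]] phibij.
move=> [v [w [[adj [phH [psH [phHs [phHeq [phHwt [phHwv [psHinj [psHs psHj]]]]]]]]]]]].
move=> [l [lm [degx [wv [ww [dv dw]]]]]].
have pj e a b : joins e a b -> joins (psi e) (phi a) (phi b).
  by move/joinsE => [[<- <-]|[<- <-]]; [exact: psij | rewrite joins_sym; exact: psij].
have vw : v != w.
  by case/existsP: adj => e /joinsE [[<- <-]|[<- <-]]; [exact: ends_ne| rewrite eq_sym; exact: ends_ne].
have hvw : phi v != phi w by rewrite (inj_eq phinj).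
have pnj e a b : ~~ joins e a b -> ~~ joins (psi e) (phi a) (phi b).
  move=> nj; apply/negP => J; move/negP: nj; apply.
  have := psij e; move: J => /joinsE J1 /joinsE J2; apply/joinsE.
  case: J1 J2 => [[-> ->]|[-> ->]] [[/phinj h1 /phinj h2]|[/phinj h1 /phinj h2]];
    rewrite -h1 -h2; by [left; split | right; split].
have pinc e x : incident e x -> incident (psi e) (phi x).
  move=> /orP [/eqP <-|/eqP <-]; first exact: joins_incident (psij e).
  by apply: (@joins_incident _ _ _ (phi (ends e).1)); rewrite joins_sym; apply: psij.
have degle x : (deg x <= deg (phi x))%N.
  by apply: card_mono psinj _ => e; exact: pinc.
have multle a b : (mult a b <= mult (phi a) (phi b))%N.
  by apply: card_mono psinj _ => e; exact: pj.
have Dle a b : (#|[set e | incident e a && ~~ joins e a b]| <=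
                #|[set e | incident e (phi a) && ~~ joins e (phi a) (phi b)]|)%N.
  apply: card_mono psinj _ => e /andP [h1 h2]; apply/andP; split; [exact: pinc | exact: pnj].
have mult_sym (K : mgraph) (a b : V K) : mult a b = mult b a.
  by apply: eq_card => e; rewrite !inE joins_sym.
have [sV sVP] := section phHs.
have psHs' : forall e', exists e, ~~ joins e v w && (psH e == e').
  by move=> e'; case: (psHs e') => e [h1 h2]; exists e; rewrite h1 h2 eqxx.
have [sE sEP] := sectionP psHs'.
have sEP1 e' : ~~ joins (sE e') v w by case/andP: (sEP e').
have sEP2 e' : psH (sE e') = e' by case/andP: (sEP e') => _ /eqP.
pose G' := contr hvw.
pose fV (y : V H') : V G' := cphi hvw (phi (sV y)).
pose fE (e' : E H') : E G' := exist _ (psi (sE e')) (pnj _ _ _ (sEP1 e')).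
have fV_phi x : fV (phH x) = cphi hvw (phi x).
  rewrite /fV; have := sVP (phH x); move/phHeq => [->//|[[-> ->]|[-> ->]]]; apply/cphi_eq; [by right; left | by right; right].
have fVinj : injective fV.
  move=> y1 y2; rewrite /fV => /cphi_eq h; rewrite -(sVP y1) -(sVP y2); apply/phHeq.
  case: h => [/phinj->|[[/phinj-> /phinj->]|[/phinj-> /phinj->]]]; first by left.
  - by right; left.
  - by right; right.
case/existsP: (adj) => e0H _.
pose e0G := fE (psH e0H).
exists G'; split.
- exists (phi v), (phi w); split.
  + split.
    * by case/existsP: adj => e J; apply/existsP; exists (psi e); exact: pj.
    exists (cphi hvw), (fun e => insubd e0G e).
    split.
      by move=> y; exists (val y); apply: val_inj; rewrite val_cphi (valP y).
    split; first exact: cphi_eq.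
    split.
      by move=> x xv xw; rewrite /= /cwt val_cphi xw (negbTE xv).
    split; first by rewrite /= /cwt val_cphi hvw eqxx.
    split.
      by move=> e1 e2 n1 n2 /(congr1 val); rewrite !val_insubd /= n1 n2.
    split.
      by move=> e'; exists (val e'); split; [exact: (valP e') | exact: (valKd e0G e')].
    move=> e n.
    have -> : insubd e0G e = exist _ e n :> E G' by apply: val_inj; rewrite val_insubd /= n.
    by rewrite /joins /= eqxx.
  exists l; split; first exact: leq_trans lm (multle v w).
  split.
    move=> x xv xw; case: phibij => g gK Kg; rewrite -(Kg x).
    apply: leq_trans (degle _); apply: degx.
    - by apply/eqP => h; move: xv; rewrite -(Kg x) h eqxx.
    - by apply/eqP => h; move: xw; rewrite -(Kg x) h eqxx.
  split; first exact: le_trans wv (phiwt v).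
  split; first exact: le_trans ww (phiwt w).
  split.
    move: dv (Dle v w); rewrite (deg_split v w) (deg_split (phi v) (phi w)) => *; lia.
  move: dw (Dle w v); rewrite (deg_split w v) (deg_split (phi w) (phi v)).
  rewrite (mult_sym _ w v) (mult_sym _ (phi w) (phi v)) => *; lia.
- exists fV, fE; split; last first.
    apply: inj_surj_bij fVinj _ => z; case: phibij => g gK Kg.
    exists (phH (g (val z))); rewrite fV_phi Kg.
    by apply: val_inj; rewrite val_cphi (valP z).
  split; first exact: fVinj.
  split.
    by move=> e1 e2 /(congr1 val) /= /psinj h; rewrite -(sEP2 e1) -(sEP2 e2) h.
  split.
    move=> e'.
    have J : joins e' (phH (ends (sE e')).1) (phH (ends (sE e')).2).
      by rewrite -{1}(sEP2 e'); apply: psHj; exact: (sEP1 e').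
    have K : joins (fE e') (fV (phH (ends (sE e')).1)) (fV (phH (ends (sE e')).2)).
      rewrite !fV_phi; have := psij (sE e'); move/joinsE => [[h1 h2]|[h1 h2]];
      by rewrite /joins /= h1 h2 eqxx ?orbT.
    by move/joinsE: J => [[-> ->]|[-> ->]] //; rewrite joins_sym.
  move=> y; rewrite -(sVP y) fV_phi; set x := sV y.
  case: (eqVneq x v) => [->|xv].
    by rewrite phHwv /= /cwt val_cphi hvw eqxx; apply: lerD.
  case: (eqVneq x w) => [->|xw].
    have -> : phH w = phH v by apply/phHeq; right; right.
    have -> : cphi hvw (phi w) = cphi hvw (phi v) by apply/cphi_eq; right; right.
    by rewrite phHwv /= /cwt val_cphi hvw eqxx; apply: lerD.
  rewrite phHwt // /= /cwt val_cphi (inj_eq phinj) xw /= (inj_eq phinj) (negbTE xv).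
  exact: phiwt.
Qed.

Unset Implicit Arguments. Set Strict Implicit.

Theorem lemma3p4 (G H : mgraph) :
  spanning_submultigraph H G -> adm_contractible H -> adm_contractible G.
Proof.
move=> [phi [psi [sub bij]]] Hc; elim: H / Hc G phi psi sub bij.
- move=> H H1 G phi psi _ bij; apply: adm_single; by rewrite -(bij_eq_card bij).
- move=> H H' adm _ IH G phi psi sub bij.
  have [G' [a [phi' [psi' [s b]]]]] := step sub bij adm.
  apply: adm_step a _; exact: IH s b.
Qed.
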